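(* Let $\mathcal{A}=(Q,\gamma,W)$ be a one-dimensional pVASS. Every configuration of $\mathcal{A}$ can reach a configuration belonging to some region of $\mathcal{A}$ in at most $11|Q|^4$ transitions of $\mathcal{M}_\mathcal{A}$.
   Context: A pVASS of dimension $d\ge1$ is $\mathcal{A}=(Q,\gamma,W)$: $Q$ finite set of control states, $\gamma\subseteq Q\times\{-1,0,1\}^d\times Q$ rules, $W:\gamma\to\mathbb{N}^+$ weights. Standing assumption: the graph on $Q$ with an edge $p\to q$ iff some rule $(p,\kappa,q)$ exists is weakly connected, and for all $p,q$ at most one rule $(p,\kappa,q)$ exists. For $d=1$ configurations are $p(k)\in Q\times\mathbb{N}$. A rule $(p,\kappa,q)$ is enabled in $p(k)$ unless $\kappa=-1$ and $k=0$. The Markov chain $\mathcal{M}_\mathcal{A}$ on configurations: if no rule is enabled in $p(k)$ there is only the self-loop with probability 1; otherwise each enabled rule $(p,\kappa,q)$ of weight $\ell$ gives $p(k)\to q(k+\kappa)$ with probability $\ell/T$, $T$ the total weight of enabled rules. $\mathit{post}^*(X)$/$\mathit{pre}^*(X)$ are the sets of configurations reachable from / able to reach $X$. $\mathscr{C}_\mathcal{A}$ is the finite Markov chain on $Q$ with $p\to q$ with probability $W((p,\kappa,q))/T_p$ ($T_p$ total weight of rules with source $p$); BSCC = bottom strongly connected component. Regions: for $p\in Q$, the type I region determined by $p$ is $\mathit{post}^*(p(0))$ if this set is finite and contained in $\mathit{pre}^*(p(0))$, and $\emptyset$ otherwise. For $p$ in a BSCC $S$ of $\mathscr{C}_\mathcal{A}$,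 the type II region determined by $p$ is $\mathit{post}^*(p(0))$ if this set is infinite and contained in $\mathit{pre}^*(p(0))$, and $\emptyset$ otherwise. For a BSCC $S$, the type III region determined by $S$ is the set of all $p(k)$ with $p\in S$, $k\ge1$, that cannot reach any configuration with zero counter. Let $R_I(S)$, $R_{II}(S)$ be the unions of the type I, resp. type II, regions determined by states of $S$, and $D(S)=\big((S\times\mathbb{N})\cap\mathit{pre}^*(R_I(S))\big)\setminus\big(R_I(S)\cup\mathit{pre}^*(R_{II}(S))\big)$; the type IV region determined by $S$ is $D(S)$ if $D(S)$ is infinite and $\emptyset$ otherwise. A region of $\mathcal{A}$ is any of these sets. *)

(* Defs.v *)
From HB Require Import structures.
From mathcomp Require Import all_boot all_order all_algebra.
Set Implicit Arguments. Unset Strict Implicit. Unset Printing Implicit Defensive.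
Import Order.TTheory GRing.Theory Num.Theory.

Definition updates : seq int := [:: (-1)%R; 0%R; 1%R].

(* A one-dimensional pVASS: rules gamma (as a boolean relation p kappa q)
   and weights W (only relevant on rules). *)
Record pVASS1 (Q : finType) := PVASS1 {
  gamma : Q -> int -> Q -> bool;
  W : Q -> int -> Q -> nat
}.

Section PVASS.
Variable Q : finType.
Variable A : pVASS1 Q.

Definition qedge (p q : Q) : bool := has (fun k => gamma A p k q) updates.

Definition wf : Prop :=
  [/\ (forall p k q, gamma A p k q -> k \in updates),
      (forall p k q, gamma A p k q -> (0 < W A p k q)%N),
      (forall p k k' q, gamma A p k q -> gamma A p k' q -> k = k') &
      (forall p q : Q, connect (fun x y => qedge x y || qedge y x) p q)].

Definition cfg := (Q * nat)%type.

Definition enabled (k : int) (n : nat) : bool := ~~ ((k == (-1)%R) && (n == 0%N)).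

Definition Tot (p : Q) (n : nat) : nat :=
  \sum_(q : Q) \sum_(k <- updates | gamma A p k q && enabled k n) W A p k q.

Definition probM (c c' : cfg) : rat :=
  let: (p, n) := c in let: (q, n') := c' in
  if Tot p n == 0%N then ((p == q) && (n == n'))%:R%R
  else ((\sum_(k <- updates | [&& gamma A p k q, enabled k n
                                  & (n'%:Z == n%:Z + k)%R]) W A p k q)%:R%R
        / (Tot p n)%:R%R)%R.

Definition step (c c' : cfg) : Prop := (0 < probM c c')%R.

Fixpoint reachN (m : nat) (c c' : cfg) : Prop :=
  match m with
  | 0 => c = c'
  | m.+1 => exists c'', step c c'' /\ reachN m c'' c'
  end.

Definition reach (c c' : cfg) : Prop := exists m, reachN m c c'.
Definition reach_within (m : nat) (c c' : cfg) : Prop :=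
  exists i, (i <= m)%N /\ reachN i c c'.

Definition post_star (X : cfg -> Prop) : cfg -> Prop :=
  fun c' => exists c, X c /\ reach c c'.
Definition pre_star (X : cfg -> Prop) : cfg -> Prop :=
  fun c => exists c', X c' /\ reach c c'.

Definition finite_set (X : cfg -> Prop) : Prop :=
  exists s : seq cfg, forall c, X c -> c \in s.
Definition subset_cfg (X Y : cfg -> Prop) : Prop := forall c, X c -> Y c.

(* the finite Markov chain C_A on Q (convention: self-loop if no outgoing rule) *)
Definition TotQ (p : Q) : nat :=
  \sum_(q : Q) \sum_(k <- updates | gamma A p k q) W A p k q.
Definition probC (p q : Q) : rat :=
  if TotQ p == 0%N then (p == q)%:R%R
  else ((\sum_(k <- updates | gamma A p k q) W A p k q)%:R%R / (TotQ p)%:R%R)%R.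
Definition cedge (p q : Q) : bool := (0 < probC p q)%R.

Definition BSCC (S : {set Q}) : Prop :=
  [/\ S != set0,
      (forall p q, p \in S -> q \in S -> connect cedge p q) &
      (forall p q, p \in S -> cedge p q -> q \in S)].

Definition zero_cfg (p : Q) : cfg -> Prop := fun c => c = (p, 0%N).

Definition regionI (p : Q) (c : cfg) : Prop :=
  [/\ finite_set (post_star (zero_cfg p)),
      subset_cfg (post_star (zero_cfg p)) (pre_star (zero_cfg p)) &
      post_star (zero_cfg p) c].

Definition regionII (p : Q) (c : cfg) : Prop :=
  [/\ ~ finite_set (post_star (zero_cfg p)),
      subset_cfg (post_star (zero_cfg p)) (pre_star (zero_cfg p)) &
      post_star (zero_cfg p) c].

Definition regionIII (S : {set Q}) (c : cfg) : Prop :=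
  [/\ c.1 \in S, (1 <= c.2)%N & ~ (exists q, reach c (q, 0%N))].

Definition R_I (S : {set Q}) (c : cfg) : Prop := exists p, p \in S /\ regionI p c.
Definition R_II (S : {set Q}) (c : cfg) : Prop := exists p, p \in S /\ regionII p c.

Definition D (S : {set Q}) (c : cfg) : Prop :=
  [/\ c.1 \in S, pre_star (R_I S) c, ~ R_I S c & ~ pre_star (R_II S) c].

Definition regionIV (S : {set Q}) (c : cfg) : Prop :=
  ~ finite_set (D S) /\ D S c.

Definition in_some_region (c : cfg) : Prop :=
  (exists p, regionI p c) \/
  (exists S p, [/\ BSCC S, p \in S & regionII p c]) \/
  (exists S, BSCC S /\ regionIII S c) \/
  (exists S, BSCC S /\ regionIV S c).

End PVASS.

(* Main.v *)
Require Import Defs.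
From HB Require Import structures.
From mathcomp Require Import all_boot all_order all_algebra zify.
From Stdlib Require Import Classical ClassicalEpsilon.
Set Implicit Arguments. Unset Strict Implicit. Unset Printing Implicit Defensive.
Import Order.TTheory GRing.Theory Num.Theory.

Section S.
Variable Q : finType.
Variable A : pVASS1 Q.
Hypothesis wfA : wf A.

Lemma sum_upd (P : pred int) (F : int -> nat) :
  \sum_(k <- updates | P k) F k =
  ((if P (-1)%R then F (-1)%R else 0) + (if P 0%R then F 0%R else 0) + (if P 1%R then F 1%R else 0))%N.
Proof. rewrite /updates !big_cons big_nil.
case: (P (-1)%R); case: (P 0%R); case: (P 1%R) => /=; by rewrite ?addn0 ?add0n ?addnA.
Qed.

Lemma in_upd k : (k \in updates) = [|| k == (-1)%R, k == 0%R | k == 1%R].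
Proof. by rewrite /updates !inE. Qed.

Lemma upd_gt0 (P : pred int) (F : int -> nat) :
  (0 < \sum_(k <- updates | P k) F k)%N <-> exists k, k \in updates /\ P k /\ (0 < F k)%N.
Proof.
rewrite sum_upd; split=> [|[k [Hk [Pk Fk]]]].
{ case E1: (P (-1)%R); case E2: (P 0%R); case E3: (P 1%R) => /= H.
  all: try (case: (posnP (F (-1)%R)) => H1; [|by exists (-1)%R; rewrite in_upd eqxx E1]).
  all: try (case: (posnP (F 0%R)) => H2; [|by exists 0%R; rewrite in_upd eqxx E2 orbT]).
  all: try (case: (posnP (F 1%R)) => H3; [|by exists 1%R; rewrite in_upd eqxx E3 !orbT]).
  all: by rewrite ?H1 ?H2 ?H3 in H. }
{ move: Hk; rewrite in_upd => /or3P [] /eqP Ek; subst k;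
  rewrite Pk; move: Fk; case: (P _); case: (P _);
  generalize (F (-1)%R) (F 0%R) (F 1%R) => a b c; lia. }
Qed.
Lemma sum_upd_ge (P : pred int) (F : int -> nat) k :
  k \in updates -> P k -> (F k <= \sum_(k <- updates | P k) F k)%N.
Proof.
move=> Hk Pk; rewrite sum_upd; move: Hk; rewrite in_upd => /or3P [] /eqP Ek; subst k;
  rewrite Pk; case: (P _); case: (P _);
  generalize (F (-1)%R) (F 0%R) (F 1%R) => a b c; lia.
Qed.

Lemma wf_upd p k q : gamma A p k q -> k \in updates.
Proof. by case: wfA => H _ _ _; apply: H. Qed.

Lemma wf_W p k q : gamma A p k q -> (0 < W A p k q)%N.
Proof. by case: wfA => _ H _ _; apply: H. Qed.

Lemma Tot_ge p n q k : gamma A p k q -> enabled k n -> (W A p k q <= Tot A p n)%N.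
Proof.
move=> G E; rewrite /Tot (bigD1 q) //=; apply: leq_trans (leq_addr _ _).
by apply: (@sum_upd_ge (fun k => gamma A p k q && enabled k n) (fun k => W A p k q) k) (wf_upd G) _; rewrite G E.
Qed.

Lemma stepP p n q n' : step A (p,n) (q,n') <->
  (Tot A p n = 0 /\ p = q /\ n = n') \/
  (exists k, [/\ k \in updates, gamma A p k q, enabled k n & (n'%:Z = n%:Z + k)%R]).
Proof.
rewrite /step /probM /=; case: eqP => HT.
  rewrite ltr0n lt0b; split.
    by case/andP => /eqP E1 /eqP E2; left; subst.
  case=> [[_ [-> ->]]|[k [Hk G E _]]]; first by rewrite !eqxx.
  by move: (Tot_ge G E) (wf_W G); rewrite HT leqn0 => /eqP ->.
rewrite ltr_pdivlMr ?ltr0n ?lt0n; last by apply/eqP.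
rewrite mul0r ltr0n upd_gt0; split.
  by move=> [k [Hk [/and3P [G E /eqP H] _]]]; right; exists k.
case=> [[]|[k [Hk G E H]]] //; exists k; split => //; split; first by rewrite G E H eqxx.
exact: wf_W G.
Qed.

Notation cfg := (cfg Q).
Notation reachN := (reachN A).
Notation reach := (reach A).
Notation step := (step A).
Notation reach_within := (reach_within A).

Lemma reachN_cat a b c d e : reachN a c d -> reachN b d e -> reachN (a + b) c e.
Proof.
elim: a c => [|a IH] c /= H1 H2; first by subst.
by case: H1 => c'' [S R]; exists c''; split => //; apply: IH R H2.
Qed.

Lemma reach_trans c d e : reach c d -> reach d e -> reach c e.
Proof. by move=> [a H1] [b H2]; exists (a + b); apply: reachN_cat H1 H2. Qed.

Lemma within_trans a b c d e : reach_within a c d -> reach_within b d e -> reach_within (a + b) c e.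
Proof.
move=> [i [Hi H1]] [i' [Hi' H2]]; exists (i + i'); split; first by apply: leq_add.
exact: reachN_cat H1 H2.
Qed.

Lemma within_mono a b c d : a <= b -> reach_within a c d -> reach_within b c d.
Proof. by move=> Hab [i [Hi H]]; exists i; split => //; apply: leq_trans Hab. Qed.

Lemma within_reach a c d : reach_within a c d -> reach c d.
Proof. by move=> [i [_ H]]; exists i. Qed.

Lemma reach0 c : reach c c.
Proof. by exists 0. Qed.

Lemma within0 a c : reach_within a c c.
Proof. by exists 0. Qed.

Lemma step_reach c d : step c d -> reach c d.
Proof. by move=> S; exists 1; exists d. Qed.

Lemma within_step a c d e : step c d -> reach_within a d e -> reach_within a.+1 c e.
Proof. by move=> S [i [Hi H]]; exists i.+1; split => //; exists d. Qed.

Lemma shift_up L p n q n' j : reachN L (p,n) (q,n') -> reach_within L (p, n + j) (q, n' + j).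
Proof.
elim: L p n => [|L IH] p n /=.
  by case=> -> ->; apply: within0.
move=> [[r n''] [S R]]; case/stepP: S => [[_ [E1 E2]]|[k [Hk G E H]]].
  by subst; apply: (within_mono (leqnSn L)); apply: IH.
apply: (within_step (d := (r, n'' + j))); last by apply: IH.
apply/stepP; right; exists k; split => //.
  by move: E; rewrite /enabled addn_eq0; case: (k == _) => //=; case: (n == 0).
by move: H; lia.
Qed.

Definition ZR (c : cfg) := exists r, reach c (r, 0).

Lemma enabled_pos k n : 0 < n -> enabled k n.
Proof. by rewrite /enabled; case: n => //= n _; rewrite andbF. Qed.

Lemma zr_downN L p m r m' : reachN L (p,m) (r,0) -> m' <= m ->
  exists r', reach_within L (p,m') (r',0).
Proof.
elim: L p m m' => [|L IH] p m m' /=.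
  by case=> E1 E2; subst; rewrite leqn0 => /eqP ->; exists r; apply: within0.
move=> [[q n''] [S R]] Hm.
case: (posnP m') => Hm'; first by subst; exists p; apply: within0.
case/stepP: S => [[_ [E1 E2]]|[k [Hk G E H]]].
  subst; have [r' Hr] := IH _ _ m' R Hm; exists r'; exact: within_mono (leqnSn L) Hr.
have Hk' : (-1 <= k)%R by move: Hk; rewrite in_upd => /or3P [] /eqP ->.
have [n3 Hn3] : exists n3 : nat, (n3%:Z = m'%:Z + k)%R.
  by exists `|(m'%:Z + k)%R|%N; move: Hm' Hk'; lia.
have [r' Hr] := IH _ _ n3 R ltac:(move: Hm H Hn3; lia).
exists r'; apply: within_step Hr; apply/stepP; right; exists k; split => //.
exact: enabled_pos.
Qed.

Lemma zr_down p m m' : ZR (p,m) -> m' <= m -> ZR (p,m').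
Proof.
move=> [r [L H]] Hm; have [r' H'] := zr_downN H Hm; exists r'; exact: within_reach H'.
Qed.


Fixpoint spath (P : cfg -> Prop) (L : nat) (c d : cfg) : Prop :=
  match L with
  | 0 => c = d
  | L.+1 => P c /\ exists c'', step c c'' /\ spath P L c'' d
  end.

Lemma spath_head P L c d : spath P L c d -> P d -> P c.
Proof. by case: L => [|L] /= [] // ->. Qed.

Lemma spath_reachN P L c d : spath P L c d -> reachN L c d.
Proof.
elim: L c => [|L IH] c //= [_ [c'' [S R]]]; exists c''; split => //; exact: IH.
Qed.

Lemma reachN_spath L c d : reachN L c d -> spath (fun _ => True) L c d.
Proof.
elim: L c => [|L IH] c //= [c'' [S R]]; split => //; exists c''; split => //; exact: IH.
Qed.

Lemma spath_mono (P P' : cfg -> Prop) L c d : (forall u, P u -> P' u) -> spath P L c d -> spath P' L c d.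
Proof.
move=> HP; elim: L c => [|L IH] c //= [Pc [c'' [S R]]]; split; first exact: HP.
by exists c''; split => //; apply: IH.
Qed.

Lemma spath_cat P a b c d e : spath P a c d -> spath P b d e -> P d \/ b = 0 -> spath P (a + b) c e.
Proof.
elim: a c => [|a IH] c /= H1 H2 Hd; first by subst.
case: H1 => Pc [c'' [S R]]; split => //; exists c''; split => //; exact: IH R H2 Hd.
Qed.

Lemma step_bound p n q n' : step (p,n) (q,n') -> n <= n'.+1 /\ n' <= n.+1.
Proof.
case/stepP => [[_ [_ ->]]|[k [Hk _ _ H]]]; first by lia.
by move: Hk H; rewrite in_upd => /or3P [] /eqP ->; lia.
Qed.

Lemma shift_down j L p n q n' : spath (fun u => j <= u.2) L (p,n) (q,n') -> j <= n' ->
  reach_within L (p, n - j) (q, n' - j).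
Proof.
elim: L p n => [|L IH] p n /=.
  by case=> -> -> _; apply: within0.
move=> [Hj [[r n''] [S R]]] Hn'.
have Hj'' : j <= n'' := spath_head R Hn'.
case/stepP: S => [[_ [E1 E2]]|[k [Hk G E H]]].
  by subst; apply: (within_mono (leqnSn L)); apply: IH.
apply: (within_step (d := (r, n'' - j))); last by apply: IH.
apply/stepP; right; exists k; split => //.
  move: Hk H E; rewrite in_upd /enabled => /or3P [] /eqP -> H //=.
  by case: eqP => // _; rewrite subn_eq0; move: H Hj''; lia.
by move: H Hj Hj''; lia.
Qed.

Lemma sum_upd_sub (P P' : pred int) (F : int -> nat) : (forall k, P k -> P' k) ->
  \sum_(k <- updates | P k) F k <= \sum_(k <- updates | P' k) F k.
Proof.
move=> H; rewrite big_mkcond [X in _ <= X]big_mkcond /=; apply: leq_sum => k _.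
by case E: (P k); rewrite ?(H _ E).
Qed.

Lemma Tot_le p n : Tot A p n <= TotQ A p.
Proof.
apply: leq_sum => q _; apply: sum_upd_sub => k; by case/andP.
Qed.

Lemma TotQ_ge p k q : gamma A p k q -> W A p k q <= TotQ A p.
Proof.
move=> G; rewrite /TotQ (bigD1 q) //=; apply: leq_trans (leq_addr _ _).
exact: (@sum_upd_ge (fun k => gamma A p k q) (fun k => W A p k q) k) (wf_upd G) _.
Qed.

Lemma rule_cedge p k q : gamma A p k q -> cedge A p q.
Proof.
move=> G; rewrite /cedge /probC.
have HT : 0 < TotQ A p := leq_trans (wf_W G) (TotQ_ge G).
rewrite eqn0Ngt HT /= ltr_pdivlMr ?ltr0n // mul0r ltr0n.
apply: leq_trans (wf_W G) _.
exact: (@sum_upd_ge (fun k => gamma A p k q) (fun k => W A p k q) k) (wf_upd G) _.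
Qed.

Lemma step_cedge p n q n' : step (p,n) (q,n') -> p = q \/ cedge A p q.
Proof.
case/stepP => [[_ [-> _]]|[k [_ G _ _]]]; [by left | right; exact: rule_cedge G].
Qed.

Lemma cedge_step p q n : cedge A p q -> 0 < n -> exists n', step (p,n) (q,n') /\ n <= n'.+1.
Proof.
rewrite /cedge /probC; case: eqP => HT.
  rewrite ltr0n lt0b => /eqP <- _; exists n; split => //.
  apply/stepP; left; split => //; apply/eqP; rewrite -leqn0 -HT; exact: Tot_le.
rewrite ltr_pdivlMr ?ltr0n ?lt0n; last by apply/eqP.
rewrite mul0r ltr0n upd_gt0 => -[k [Hk [G _]]] Hn.
have Hk' : (-1 <= k)%R by move: Hk; rewrite in_upd => /or3P [] /eqP ->.
have [n3 Hn3] : exists n3 : nat, (n3%:Z = n%:Z + k)%R.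
  by exists `|(n%:Z + k)%R|%N; move: Hn Hk'; lia.
exists n3; split; last by move: Hn3 Hk'; lia.
apply/stepP; right; exists k; split => //; apply: enabled_pos; by rewrite lt0n.
Qed.

Definition closedS (S : {set Q}) := forall p q, p \in S -> cedge A p q -> q \in S.

Lemma reach_closed S L p n q n' : closedS S -> p \in S -> reachN L (p,n) (q,n') -> q \in S.
Proof.
move=> HS; elim: L p n => [|L IH] p n /=; first by move=> ? [<- _].
move=> Hp [[r n''] [St R]]; apply: (IH r n'') R.
by case: (step_cedge St) => [<- //|]; apply: HS.
Qed.

Lemma sim_nzr p s m : path (cedge A) p s -> ~ ZR (p,m) ->
  exists k, reachN (size s) (p,m) (last p s, k) /\ ~ ZR (last p s, k).
Proof.
elim: s p m => [|q s IH] p m /=; first by move=> _ H; exists m.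
case/andP => E P H.
have Hm : 0 < m.
  by case: (posnP m) => // Hm; subst; case: H; exists p; apply: reach0.
have [n' [S _]] := cedge_step E Hm.
have H' : ~ ZR (q,n').
  move=> [r Hr]; apply: H; exists r; apply: reach_trans Hr; exact: step_reach.
have [k [R Hk]] := IH q n' P H'; exists k; split => //; exists (q,n'); split => //.
Qed.

Lemma sim_big p s m : path (cedge A) p s -> size s <= m ->
  exists k, reachN (size s) (p,m) (last p s, k) /\ m <= k + size s.
Proof.
elim: s p m => [|q s IH] p m /=; first by move=> _ _; exists m; rewrite addn0.
case/andP => E P H.
have [n' [S Hn']] := cedge_step E (leq_trans (ltn0Sn _) H).
have [k [R Hk]] := IH q n' P ltac:(move: H Hn'; lia).
by exists k; split; [exists (q,n') | move: Hn' Hk; lia].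
Qed.

Lemma bottom (T : finType) (e : rel T) x :
  exists2 y, connect e x y & forall z, connect e y z -> connect e z y.
Proof.
move: {2}#|[set z | connect e x z]| (leqnn #|[set z | connect e x z]|) => N.
elim: N x => [|N IH] x HN.
  by move: HN; rewrite leqn0 => /eqP/card0_eq/(_ x); rewrite !inE connect0.
case: (boolP [exists z, connect e x z && ~~ connect e z x]).
  case/existsP => z /andP [Cxz NCzx].
  have Hp : [set w | connect e z w] \proper [set w | connect e x w].
    apply/properP; split.
      by apply/subsetP => w; rewrite !inE; apply: connect_trans.
    by exists x; rewrite !inE ?connect0.
  have [y Czy Hy] := IH z ltac:(move: (proper_card Hp) HN; lia).
  by exists y => //; apply: connect_trans Czy.
move=> /existsPn H; exists x => // z Cxz; move: (H z); by rewrite Cxz /= negbK.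
Qed.

Lemma short_path (T : finType) (e : rel T) x y : connect e x y ->
  exists s, [/\ path e x s, last x s = y & size s < #|T|].
Proof.
case/connectP => s Ps ->; case: (shortenP Ps) => s' Ps' U _.
exists s'; split => //; move/card_uniqP: U => /= U.
by move: (max_card (mem (x :: s'))); rewrite U /=.
Qed.

Lemma bscc_of p : exists S s, [/\ BSCC A S, s \in S & connect (cedge A) p s].
Proof.
have [s Cps Hs] := bottom (cedge A) p.
exists [set y | connect (cedge A) s y], s; split; last by [].
- split.
  + by apply/set0Pn; exists s; rewrite inE connect0.
  + move=> x y; rewrite !inE => Hx Hy; apply: connect_trans (Hs _ Hx) Hy.
  + move=> x y; rewrite !inE => Hx E; apply: connect_trans Hx (connect1 E).
- by rewrite inE connect0.
Qed.

Lemma BSCC_closed S : BSCC A S -> closedS S.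
Proof. by case=> _ _ H. Qed.

Lemma lemIII c : ~ ZR c -> exists d, reach_within #|Q| c d /\ in_some_region A d.
Proof.
case: c => p m H.
have [S [s [HS Hs Cps]]] := bscc_of p.
have [s' [Ps Ls Ss]] := short_path Cps.
have [k [R Hk]] := sim_nzr Ps H.
rewrite Ls in R Hk.
exists (s,k); split; first by exists (size s'); split => //; apply: ltnW.
right; right; left; exists S; split => //; split => //.
  by case: (posnP k) => // Ek; rewrite Ek in Hk; case: Hk; exists s; apply: reach0.
Qed.

Lemma split_first (P R : cfg -> Prop) L c d : spath P L c d ->
  (spath (fun u => P u /\ ~ R u) L c d /\ ~ R d) \/
  (exists e L1 L2, [/\ R e, spath (fun u => P u /\ ~ R u) L1 c e, spath P L2 e d & L1 + L2 = L]).
Proof.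
elim: L c => [|L IH] c /=.
  move=> <-; case: (classic (R c)) => Hc; last by left.
  by right; exists c, 0, 0.
move=> [Pc [c'' [S Rp]]]; case: (classic (R c)) => Hc.
  by right; exists c, 0, L.+1; split => //=; split => //; exists c''.
case: (IH c'' Rp) => [[H1 H2]|[e [L1 [L2 [Re H1 H2 HL]]]]].
  by left; split => //; split => //; exists c''.
right; exists e, L1.+1, L2; split => //; last by rewrite addSn HL.
by split => //; exists c''.
Qed.

Definition NQ := #|Q|.

Definition NegCyc (c d : cfg) := exists x a b L', [/\ reach c (x,a), b < a,
  spath (fun u => a <= u.2 + NQ) L' (x,a) (x,b), a <= b + NQ & reach (x,b) d].

Lemma NegCyc_pre c c' d : reach c c' -> NegCyc c' d -> NegCyc c d.
Proof.
move=> H [x [a [b [L' [H1 H2 H3 H4 H5]]]]]; exists x, a, b, L'; split => //.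
exact: reach_trans H H1.
Qed.

Lemma NegCyc_post c d d' : NegCyc c d -> reach d d' -> NegCyc c d'.
Proof.
move=> [x [a [b [L' [H1 H2 H3 H4 H5]]]]] H; exists x, a, b, L'; split => //.
exact: reach_trans H5 H.
Qed.

Lemma NC N (V : {set Q}) : #|V| <= N -> forall L c d, spath (fun u => u.1 \in V) L c d ->
  (spath (fun u => c.2 < u.2 + #|V|) L c d /\ c.2 <= d.2 + #|V|) \/ NegCyc c d.
Proof.
elim: N V => [|N IHN] V HV L.
  case: L => [|L] c d /=; first by move=> <-; left; rewrite leq_addr.
  by move=> [Hc _]; move: HV; rewrite leqn0 => /eqP/card0_eq/(_ c.1); rewrite Hc inE.
elim/ltn_ind: L => L IHL c d; case: L IHL => [|L] IHL /=.
  by move=> <-; left; rewrite leq_addr.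
move=> [Hc [c1 [S R]]].
case: c Hc S => q m /= Hq S.
have HV1 : #|V| = #|V :\ q|.+1 by rewrite (cardsD1 q V) Hq.
have HVn : #|V| <= NQ := max_card _.
have HV' : #|V :\ q| <= N by move: HV; rewrite HV1.
case: c1 S R => q1 m1 S R; have [Sb1 _] := step_bound S.
case: (split_first (fun u => u.1 = q) R) => [[H1 H2]|[e [L1 [L2 [Re H1 H2 HL]]]]].
- have H1' : spath (fun u => u.1 \in V :\ q) L (q1,m1) d.
    by apply: spath_mono H1 => u [Hu1 Hu2]; rewrite in_setD1 Hu1 andbT; apply/eqP.
  case: (IHN _ HV' L (q1,m1) d H1') => [[H3 H4]|H3]; last first.
    by right; apply: NegCyc_pre H3; apply: step_reach.
  left; split; last by move: H4 Sb1; rewrite HV1 /=; lia.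
  split; first by rewrite /=; move: HV1; lia.
  exists (q1,m1); split => //; apply: spath_mono H3 => u /=; move: Sb1 HV1; lia.
- case: e Re H1 H2 => q2 m2 /= Eq2 H1 H2; subst q2.
  have H1' : spath (fun u => u.1 \in V :\ q) L1 (q1,m1) (q,m2).
    by apply: spath_mono H1 => u [Hu1 Hu2]; rewrite in_setD1 Hu1 andbT; apply/eqP.
  case: (IHN _ HV' L1 (q1,m1) (q,m2) H1') => [[H3 H4]|H3]; last first.
    right; apply: NegCyc_pre (step_reach S) _; apply: NegCyc_post H3 _.
    by exists L2; apply: spath_reachN H2.
  case: (ltnP m2 m) => Hm2.
    right; exists q, m, m2, L1.+1; split => //.
    + exact: reach0.
    + split; first by rewrite leq_addr.
      exists (q1,m1); split => //; apply: spath_mono H3 => u /=; move: Sb1 HV1 HVn; lia.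
    + by move: H4 Sb1 HV1 HVn; rewrite /=; lia.
    + by exists L2; apply: spath_reachN H2.
  case: (IHL L2 ltac:(lia) (q,m2) d H2) => [[H5 H6]|H5]; last first.
    right; apply: NegCyc_pre H5; apply: reach_trans (step_reach S) _.
    by exists L1; apply: spath_reachN H1.
  left; split; last by move: H6 Hm2; rewrite /=; lia.
  split; first by rewrite /=; move: HV1; lia.
  exists (q1,m1); split => //; rewrite -HL; apply: spath_cat.
  + apply: spath_mono H3 => u /=; move: Sb1 HV1; lia.
  + apply: spath_mono H5 => u /=; move: Hm2; lia.
  + by left => /=; move: Hm2 HV1; lia.
Qed.

Definition CycH x e al := forall k, al <= k -> reach (x,k) (x,k - e).

Lemma cyc_of x a b L' : b < a -> spath (fun u => a <= u.2 + NQ) L' (x,a) (x,b) -> a <= b + NQ ->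
  exists e al, [/\ 0 < e, e <= al, al <= NQ, al <= a & CycH x e al].
Proof.
move=> Hab Hsp Hab2.
case: (leqP a NQ) => HaN.
  exists (a - b), a; split => //; try lia.
  move=> k Hk; have := shift_up (k - a) (spath_reachN Hsp) => /within_reach.
  have -> : a + (k - a) = k by lia.
  by have -> : b + (k - a) = k - (a - b) by lia.
have Hsp' : spath (fun u => a - NQ <= u.2) L' (x,a) (x,b).
  by apply: spath_mono Hsp => u; lia.
have := shift_down Hsp' ltac:(lia) => /within_reach Hr.
exists (a - b), NQ; split => //; try lia.
move=> k Hk; case: Hr => L2 Hr; have := shift_up (k - NQ) Hr => /within_reach.
have -> : a - (a - NQ) + (k - NQ) = k by lia.
by have -> : b - (a - NQ) + (k - NQ) = k - (a - b) by lia.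
Qed.

Lemma pump x e al k j : CycH x e al -> al <= k -> reach (x, k + j * e) (x, k).
Proof.
move=> H Hk; elim: j => [|j IH]; first by rewrite mul0n addn0; apply: reach0.
apply: reach_trans IH; have := H (k + j.+1 * e) ltac:(lia).
by have -> : k + j.+1 * e - e = k + j * e by rewrite mulSn; lia.
Qed.

Lemma zr_all x e al a : 0 < e -> CycH x e al -> al <= a -> ZR (x,a) -> forall k, ZR (x,k).
Proof.
move=> He H Ha [r Hr] k; apply: (@zr_down x (a + k * e)); last by nia.
by exists r; apply: reach_trans Hr; apply: pump H Ha.
Qed.

Lemma zr_S S x y k : BSCC A S -> x \in S -> y \in S -> (forall k, ZR (x,k)) -> ZR (y,k).
Proof.
move=> [_ HS _] Hx Hy Hall.
have [s [Ps Ls Ss]] := short_path (HS _ _ Hy Hx).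
have [k' [R Hk']] := sim_big (m := k + NQ) Ps ltac:(rewrite /NQ; lia).
apply: (@zr_down y (k + NQ)); last by lia.
have [r Hr] := Hall k'; exists r; apply: reach_trans Hr; rewrite -Ls; by exists (size s).
Qed.

Definition pb (P : Prop) : bool := if excluded_middle_informative P then true else false.

Lemma pbP (P : Prop) : reflect P (pb P).
Proof. by rewrite /pb; case: excluded_middle_informative => H; constructor. Qed.

Definition zrel : rel Q := fun a b => pb (reach (a,0) (b,0)).

Lemma connect_zrel a b : connect zrel a b -> reach (a,0) (b,0).
Proof.
case/connectP => s; elim: s a => [|c s IH] a /=; first by move=> _ ->; apply: reach0.
case/andP => /pbP H1 H2 H3; apply: reach_trans H1 _; exact: IH.
Qed.

Lemma botz c : ZR c -> exists t, reach c (t,0) /\ (forall r, reach (t,0) (r,0) -> reach (r,0) (t,0)).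
Proof.
move=> [r Hr]; have [t Crt Bt] := bottom zrel r.
exists t; split; first by apply: reach_trans Hr (connect_zrel Crt).
move=> r' H; apply: connect_zrel; apply: Bt; apply: connect1; exact/pbP.
Qed.

Lemma postP p c : post_star A (zero_cfg p) c <-> reach (p,0) c.
Proof. by split => [[c0 [-> H]]|H] //; exists (p,0). Qed.

Lemma preP p c : pre_star A (zero_cfg p) c <-> reach c (p,0).
Proof. by split => [[c0 [-> H]]|H] //; exists (p,0). Qed.

Lemma bounded_finite (X : cfg -> Prop) B : (forall c, X c -> c.2 < B) -> finite_set X.
Proof.
move=> H; exists [seq (q, i) | q <- enum Q, i <- iota 0 B] => [[q i]] Hc.
apply: (allpairs_f (fun q i => (q,i))); first by rewrite mem_enum.
by rewrite mem_iota add0n; apply: H Hc.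
Qed.

Lemma unbounded (X : cfg -> Prop) B : ~ finite_set X -> exists c, X c /\ B <= c.2.
Proof.
move=> H; apply: NNPP => H'; apply: H; apply: (@bounded_finite _ B) => c Xc.
by rewrite ltnNge; apply/negP => Hb; apply: H'; exists c.
Qed.

Lemma finite_bound (X : cfg -> Prop) : finite_set X -> exists B, forall c, X c -> c.2 <= B.
Proof.
move=> [l Hl]; exists (\max_(u <- l) u.2) => c Xc.
exact: (@leq_bigmax_seq _ l xpredT (fun u : cfg => u.2) c (Hl c Xc)).
Qed.

Lemma RI_bound : exists M, forall p c, regionI A p c -> c.2 <= M.
Proof.
suff : forall l : seq Q, exists M, forall p c, p \in l -> regionI A p c -> c.2 <= M.
  by case/(_ (enum Q)) => M H; exists M => p c; apply: H; rewrite mem_enum.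
elim=> [|p l [M IH]]; first by exists 0.
case: (classic (finite_set (post_star A (zero_cfg p)))) => Hf.
  have [B HB] := finite_bound Hf.
  exists (maxn M B) => p' c; rewrite inE => /orP [/eqP ->|Hp] Hr.
    by case: Hr => _ _ Hc; apply: leq_trans (HB c Hc) (leq_maxr _ _).
  by apply: leq_trans (leq_maxl _ _); apply: IH Hp Hr.
exists M => p' c; rewrite inE => /orP [/eqP ->|Hp] Hr; first by case: Hr.
exact: IH Hp Hr.
Qed.

Lemma reachN_reach L c d : reachN L c d -> reach c d.
Proof. by exists L. Qed.

Lemma lemII S x e al k : BSCC A S -> x \in S -> 0 < e -> CycH x e al -> al <= k ->
  pre_star A (R_II A S) (x,k) -> R_II A S (x,k).
Proof.
move=> HS Hx He Hc Hk [c' [[t [Ht [Hnf Hrec /postP Hpc']]] Hr]].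
have [[y M] [/postP Pw Hw]] := unbounded (k + 2 * NQ) Hnf.
have Hy : y \in S by case: Pw => L Pw; apply: reach_closed (BSCC_closed HS) Ht Pw.
have [_ HS2 _] := HS.
have [s [Ps Ls Ss]] := short_path (HS2 _ _ Hy Hx).
have Ss' : size s < NQ := Ss.
have [M' [RM HM]] := sim_big (m := M) Ps ltac:(move: Ss' Hw => /=; lia).
rewrite Ls in RM.
have Hrt : reach c' (t,0) by apply/preP; apply: Hrec; apply/postP.
have HxM : reach (x,k) (x,M').
  apply: reach_trans Hr _; apply: reach_trans Hrt _; apply: reach_trans Pw _.
  exact: reachN_reach RM.
have HkM : k < M' by move: HM Ss' Hw => /=; lia.
pose D := M' - k.
have Hshift : forall i, reach (x, k + i) (x, k + i + D).
  move=> i; case: HxM => L HL; have := shift_up i HL => /within_reach.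
  by have -> : M' + i = k + i + D by rewrite /D; lia.
have Hiter : forall j, reach (x, k + D) (x, k + D + j * D).
  elim=> [|j IH]; first by rewrite mul0n addn0; apply: reach0.
  apply: reach_trans IH _; have := Hshift (D + j * D).
  by rewrite addnA mulSn [D + j * D]addnC !addnA.
have HMk : reach (x,M') (x,k).
  have := Hiter e.-1; have -> : k + D = M' by rewrite /D; lia.
  move/reach_trans; apply.
  have -> : M' + e.-1 * D = k + D * e by rewrite /D; nia.
  exact: pump Hc Hk.
exists t; split => //; split => //; apply/postP.
apply: reach_trans Pw _; apply: reach_trans (reachN_reach RM) HMk.
Qed.

Lemma regX S x e al k : BSCC A S -> x \in S -> 0 < e -> CycH x e al ->
  (forall y k, y \in S -> ZR (y,k)) -> al <= k -> in_some_region A (x,k).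
Proof.
move=> HS Hx He Hc HZ Hk.
case: (classic (pre_star A (R_II A S) (x,k))) => HII.
  have [t [Ht HtII]] := lemII HS Hx He Hc Hk HII.
  by right; left; exists S, t; split.
have [t [Rt Bt]] := botz (HZ x k Hx).
have Ht : t \in S by case: Rt => L Rt; apply: reach_closed (BSCC_closed HS) Hx Rt.
have Hrec : subset_cfg (post_star A (zero_cfg t)) (pre_star A (zero_cfg t)).
  move=> v /postP Hv; apply/preP.
  have Hv1 : v.1 \in S by case: Hv => L Hv; case: v Hv => v1 v2 Hv; apply: reach_closed (BSCC_closed HS) Ht Hv.
  case: v Hv Hv1 => v1 v2 Hv Hv1; have [r Hr] := HZ v1 v2 Hv1.
  exact: reach_trans Hr (Bt _ (reach_trans Hv Hr)).
have HpreI : pre_star A (R_I A S) (x,k).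
  case: (classic (finite_set (post_star A (zero_cfg t)))) => Hf.
    exists (t,0); split => //; exists t; split => //; split => //; apply/postP; exact: reach0.
  case: HII; exists (t,0); split => //; exists t; split => //; split => //; apply/postP; exact: reach0.
case: (classic (R_I A S (x,k))) => HI.
  by case: HI => p0 [_ Hp0]; left; exists p0.
right; right; right; exists S; split => //; split; last by split.
move=> [l Hl]; have [M HM] := RI_bound.
have [MB HMB] := finite_bound (ex_intro _ l Hl).
pose j := M + MB + 1; pose v := (x, k + j * e).
have Hvx : reach v (x,k) by apply: pump Hc Hk.
have Hv : D A S v.
  split => //.
  - case: HpreI => c0 [Hc0 Hr0]; exists c0; split => //; exact: reach_trans Hvx Hr0.
  - move=> [p0 [_ Hp0]]; have := HM _ _ Hp0; rewrite /v /j /=; nia.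
  - move=> HvII; have := @lemII S x e al (k + j * e) HS Hx He Hc ltac:(rewrite /j; nia) HvII.
    move=> [t' [Ht' [Hnf Hrec' /postP Hp]]]; apply: HII; exists (x,k); split; last exact: reach0.
    by exists t'; split => //; split => //; apply/postP; apply: reach_trans Hp Hvx.
have := HMB v Hv; rewrite /v /j /=; nia.
Qed.

Lemma LC c : 3 * NQ <= c.2 -> exists d, reach_within (2 * NQ) c d /\ in_some_region A d.
Proof.
case: c => p m /= Hm.
have [S [s [HS Hs Cps]]] := bscc_of p.
have [s1 [Ps1 Ls1 Ss1]] := short_path Cps.
have Ss1' : size s1 < NQ := Ss1.
have [m' [R1 Hm']] := sim_big (m := m) Ps1 ltac:(lia).
rewrite Ls1 in R1.
case: (classic (ZR (s,m'))) => HZ; last first.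
  have [d [Hd Hreg]] := lemIII HZ; exists d; split => //.
  apply: (within_mono (a := size s1 + #|Q|)); first by move: Ss1'; rewrite /NQ; lia.
  apply: within_trans Hd; exists (size s1); split => //.
case: HZ => r [L HL].
have HL' : spath (fun u => u.1 \in [set: Q]) L (s,m') (r,0).
  by apply: spath_mono (reachN_spath HL) => u _; rewrite inE.
case: (NC (leqnn _) HL') => [[_ H]|[x [a [b [L' [R2 Hab Hsp Hab2 R3]]]]]].
  by move: H; rewrite cardsT -/NQ /=; lia.
have Hx : x \in S by case: R2 => L2 R2; apply: reach_closed (BSCC_closed HS) Hs R2.
have [e [al [He Heal HalN Hala Hc]]] := cyc_of Hab Hsp Hab2.
have HZa : ZR (x,a) by case: R3 => L3 R3; exists r; apply: reach_trans (reachN_reach (spath_reachN Hsp)) (reachN_reach R3).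
have Hall := zr_all He Hc Hala HZa.
have HZS : forall y k, y \in S -> ZR (y,k) by move=> y k Hy; apply: zr_S HS Hx Hy Hall.
have [_ HS2 _] := HS.
have [s2 [Ps2 Ls2 Ss2]] := short_path (HS2 _ _ Hs Hx).
have Ss2' : size s2 < NQ := Ss2.
have [m'' [R4 Hm'']] := sim_big (m := m') Ps2 ltac:(lia).
rewrite Ls2 in R4.
exists (x,m''); split; last by apply: regX HS Hx He Hc HZS _; lia.
exists (size s1 + size s2); split; first by lia.
exact: reachN_cat R1 R4.
Qed.

Lemma EX K c : exists d, reach c d /\ (in_some_region A d \/ K <= d.2).
Proof.
case: (classic (ZR c)) => HZ; last first.
  by have [d [Hd Hr]] := lemIII HZ; exists d; split; [exact: within_reach Hd | left].
have [t [Rt Bt]] := botz HZ.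
case: (classic (exists v, reach (t,0) v /\ ~ ZR v)) => [[v [Hv HvZ]]|HnZ].
  have [d [Hd Hr]] := lemIII HvZ; exists d; split; last by left.
  by apply: reach_trans Rt _; apply: reach_trans Hv _; exact: within_reach Hd.
case: (classic (exists v, reach (t,0) v /\ K <= v.2)) => [[v [Hv HvK]]|HnK].
  by exists v; split; [apply: reach_trans Rt Hv | right].
exists (t,0); split => //; left; left; exists t; split.
- apply: (@bounded_finite _ K) => v /postP Hv.
  by rewrite ltnNge; apply/negP => H; apply: HnK; exists v.
- move=> v /postP Hv; apply/preP.
  have [r Hr] : ZR v by apply: NNPP => H; apply: HnZ; exists v.
  exact: reach_trans Hr (Bt _ (reach_trans Hv Hr)).
- by apply/postP; apply: reach0.
Qed.

Definition stepb : rel cfg := fun u v => pb (step u v).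

Lemma first_hit (G : cfg -> Prop) K L c d : reachN L c d -> G d -> c.2 <= K ->
  (forall u, ~ G u -> u.2 < K) ->
  exists s, [/\ path stepb c s, G (last c s) & all (fun u : cfg => u.2 <= K) (c :: s)].
Proof.
move=> + Gd; elim: L c => [|L IH] c /=.
  by move=> -> Hd _; exists [::]; split => //=; rewrite Hd.
move=> [c'' [S R]] Hc HG.
case: (classic (G c)) => Gc; first by exists [::]; split => //=; rewrite Hc.
have Hc'' : c''.2 <= K.
  have := HG c Gc; case: c S {Hc Gc} => p n; case: c'' R => q n' R S /=.
  by have [_ ?] := step_bound S; lia.
have [s [Ps Gs As]] := IH c'' R Hc'' HG.
exists (c'' :: s); split => //=; last by rewrite Hc.
by rewrite Ps andbT; apply/pbP.
Qed.

Lemma path_reachN c s : path stepb c s -> reachN (size s) c (last c s).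
Proof.
elim: s c => [|c' s IH] c //= /andP [/pbP S P]; exists c'; split => //; exact: IH.
Qed.

Lemma box_short K c s : path stepb c s -> all (fun u : cfg => u.2 <= K) (c :: s) ->
  reach_within (NQ * K.+1) c (last c s).
Proof.
move=> Ps Al; case: (shortenP Ps) => s' Ps' U Sub.
exists (size s'); split; last exact: path_reachN.
have H : size (c :: s') <= size [seq (q, i) | q <- enum Q, i <- iota 0 K.+1].
  apply: (uniq_leq_size (s1 := c :: s') U) => -[q i] Hu.
  apply: (allpairs_f (fun q i => (q,i))); first by rewrite mem_enum.
  rewrite mem_iota add0n ltnS.
  have Hu' : (q,i) \in c :: s by move: Hu; rewrite !inE => /orP [->|/Sub ->] //; rewrite orbT.
  by move/allP: Al => /(_ _ Hu').
move: H; rewrite size_allpairs size_iota -cardE /= -/NQ => /ltnW H; exact: H.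
Qed.

Lemma main_sec c : exists c', reach_within (NQ * (3 * NQ).+1 + 2 * NQ) c c' /\ in_some_region A c'.
Proof.
case: (leqP (3 * NQ) c.2) => Hc.
  have [d [Hd Hr]] := LC Hc; exists d; split => //; apply: within_mono Hd; lia.
have [d [[L Hd] Gd]] := EX (3 * NQ) c.
have [s [Ps Gs As]] := @first_hit (fun u => in_some_region A u \/ 3 * NQ <= u.2) (3 * NQ) L c d Hd Gd
  (ltnW Hc) ltac:(by move=> u Hu; rewrite ltnNge; apply/negP => H; apply: Hu; right).
have Hw := box_short Ps As.
case: Gs => [Hr|HK].
  by exists (last c s); split => //; apply: within_mono Hw; lia.
have [d' [Hd' Hr']] := LC HK; exists d'; split => //.
exact: within_trans Hw Hd'.
Qed.
End S.

Unset Implicit Arguments.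

Theorem lemma1 (Q : finType) (A : pVASS1 Q) :
  wf A ->
  forall c : cfg Q,
    exists c' : cfg Q, reach_within A (11 * #|Q| ^ 4) c c' /\ in_some_region A c'.
Proof.
move=> wfA c; have [c' [H1 H2]] := main_sec wfA c.
exists c'; split => //; apply: within_mono H1.
have : 0 < NQ Q by rewrite /NQ; apply/card_gt0P; exists c.1.
rewrite /NQ; set n := #|Q|; nia.
Qed.
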